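(* In the setting below, define real numbers $\epsilon_t$ by $\epsilon_t=1$ for $t\le 0$ and, for $t\ge 1$, $$\epsilon_t=\kappa^t+\alpha\mu\sum_{j=0}^{t-1}\kappa^j\sum_{i=1}^{n-1}\epsilon_{t-1-j-i}.$$ Then for all $t\ge 1$, $\mathcal{E}(t)\le\epsilon_t\,\mathcal{E}(0)$.
   Context: Let $\mathcal{A}*\mathcal{X}=\mathcal{B}$ be a consistent tensor system with unique solution $\mathcal{X}^*$, $\mathcal{A}\in\mathbb{R}^{n_1\times n_2\times n}$, $\mathcal{B}\in\mathbb{R}^{n_1\times n_3\times n}$, $\alpha>0$. Frontal slices $A_k=\mathcal{A}(:,:,k)$; $\mathrm{unfold}$ stacks them vertically, $\mathrm{fold}$ is its inverse, $\mathrm{bcirc}(\mathcal{A})$ is the block-circulant matrix with $(p,q)$ block $A_{((p-q)\bmod n)+1}$, and $\mathcal{A}*\mathcal{X}=\mathrm{fold}(\mathrm{bcirc}(\mathcal{A})\mathrm{unfold}(\mathcal{X}))$. $\mathcal{I}$ is the identity tensor (first frontal slice the identity, others zero); $\mathcal{A}^T$ transposes each frontal slice and reverses the order of slices $2,\dots,n$; $\|\cdot\|_F$ is the Frobenius norm and $\|\mathcal{C}\|_{op}=\|\mathrm{bcirc}(\mathcal{C})\|_2$. $\tilde{\mathcal{A}}_k$ has $k$-th frontal slice $A_k$ and zeros elsewhere. $\kappa=\max_i\|\mathcal{I}-\alpha\tilde{\mathcal{A}}_i^T*\tilde{\mathcal{A}}_i\|_{op}$, $\mu=\max_{i\neq j}\|\tilde{\mathcal{A}}_i^T*\tilde{\mathcal{A}}_j\|_{op}$.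 Cyclic frontal slice descent: $\mathcal{X}(t)=0$ for $t\le 0$; $\mathcal{R}(t+1)=\mathcal{B}-\sum_{j=0}^{n-1}\tilde{\mathcal{A}}_{((t-j)\bmod n)+1}*\mathcal{X}(t-j)$, $\mathcal{X}(t+1)=\mathcal{X}(t)+\alpha\tilde{\mathcal{A}}_{(t\bmod n)+1}^T*\mathcal{R}(t+1)$ for $t\ge 0$. $\mathcal{E}(t)=\|\mathcal{X}(t)-\mathcal{X}^*\|_F$, so $\mathcal{E}(t)=\|\mathcal{X}^*\|_F$ for $t\le 0$. *)

(* Defs.v *)
From HB Require Import structures.
From mathcomp Require Import all_boot all_order all_algebra.
From mathcomp Require Import classical_sets reals.
Set Implicit Arguments. Unset Strict Implicit. Unset Printing Implicit Defensive.
Import Order.TTheory GRing.Theory Num.Theory.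
Local Open Scope ring_scope.

Section Tensors.
Variable R : realType.

(* A third-order tensor a x b x n, stored by its n frontal slices
   (0-based: slice k is the paper's A_{k+1}). *)
Definition tensor (a b n : nat) := {ffun 'I_n -> 'M[R]_(a, b)}.

Definition ment a b (M : 'M[R]_(a, b)) (i j : nat) : R :=
  match insub i, insub j with
  | Some i', Some j' => M i' j'
  | _, _ => 0
  end.

Definition slice a b n (A : tensor a b n) (k : nat) : 'M[R]_(a, b) :=
  match insub k with Some k' => A k' | None => 0 end.

Definition unfold a b n (X : tensor a b n) : 'M[R]_(n * a, b) :=
  \matrix_(r < n * a, c < b) ment (slice X (r %/ a)) (r %% a) c.

Definition fold a b n (M : 'M[R]_(n * a, b)) : tensor a b n :=
  [ffun k : 'I_n => \matrix_(i < a, j < b) ment M (k * a + i) j].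

(* block-circulant matrix: (p,q) block is A_{((p-q) mod n)+1}, i.e. the
   0-based slice (p - q) mod n *)
Definition bcirc a b n (A : tensor a b n) : 'M[R]_(n * a, n * b) :=
  \matrix_(r < n * a, c < n * b)
    ment (slice A ((r %/ a + n - c %/ b) %% n)) (r %% a) (c %% b).

Definition tprod a b c n (A : tensor a b n) (X : tensor b c n) : tensor a c n :=
  fold (bcirc A *m unfold X).

(* transpose: transpose every slice and reverse the order of slices 2..n *)
Definition ttr a b n (A : tensor a b n) : tensor b a n :=
  [ffun k : 'I_n => (slice A ((n - k) %% n))^T].

Definition tid a n : tensor a a n :=
  [ffun k : 'I_n => if val k == 0%N then 1%:M else 0].

Definition tslice a b n (A : tensor a b n) (k : nat) : tensor a b n :=
  [ffun l : 'I_n => if val l == k then A l else 0].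

Definition fnorm a b n (A : tensor a b n) : R :=
  Num.sqrt (\sum_(k < n) \sum_(i < a) \sum_(j < b) (A k i j) ^+ 2).

Definition vnorm m (v : 'cV[R]_m) : R := Num.sqrt (\sum_(i < m) (v i 0) ^+ 2).
Definition mnorm2 p q (M : 'M[R]_(p, q)) : R :=
  sup [set vnorm (M *m v) | v in [set v : 'cV[R]_q | vnorm v <= 1]].

Definition opnorm a b n (C : tensor a b n) : R := mnorm2 (bcirc C).

Definition kappa a b n (A : tensor a b n) (alpha : R) : R :=
  \big[Num.max/0]_(i < n)
    opnorm (tid b n - alpha *: tprod (ttr (tslice A i)) (tslice A i)).

Definition mu a b n (A : tensor a b n) : R :=
  \big[Num.max/0]_(i < n) \big[Num.max/0]_(j < n | i != j)
    opnorm (tprod (ttr (tslice A i)) (tslice A j)).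

End Tensors.

(* Main.v *)
Require Import Defs.
From HB Require Import structures.
From mathcomp Require Import all_boot all_order all_algebra.
From mathcomp Require Import classical_sets reals.
From mathcomp Require Import ring lra zify.
Import Order.TTheory GRing.Theory Num.Theory.
Set Implicit Arguments. Unset Strict Implicit.
Local Open Scope ring_scope.

Section Real.
Variable R : realType.

Lemma cs_sq (I : finType) (f g : I -> R) :
  (\sum_i f i * g i) ^+ 2 <= (\sum_i f i ^+ 2) * (\sum_i g i ^+ 2).
Proof.
set A := \sum_i f i ^+ 2; set B := \sum_i g i ^+ 2; set C := \sum_i f i * g i.
have B0 : 0 <= B by apply: sumr_ge0 => i _; exact: sqr_ge0.
have A0 : 0 <= A by apply: sumr_ge0 => i _; exact: sqr_ge0.
have [Bz|Bnz] := eqVneq B 0.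
  have g0 : forall i, g i = 0.
    move=> i; apply/eqP; rewrite -sqrf_eq0; apply/eqP.
    by move/eqP: Bz; rewrite psumr_eq0 => [/allP/(_ i (mem_index_enum _))/implyP/(_ isT)/eqP|j _]; [|exact: sqr_ge0].
  have -> : C = 0 by rewrite /C big1 // => i _; rewrite g0 mulr0.
  by rewrite Bz expr0n /= mulr0.
have Bp : 0 < B by rewrite lt_def Bnz B0.
set t := C / B.
have H : 0 <= \sum_i (f i - t * g i) ^+ 2 by apply: sumr_ge0 => i _; exact: sqr_ge0.
have E : \sum_i (f i - t * g i) ^+ 2 = A - 2 * t * C + t ^+ 2 * B.
  rewrite /A /C /B mulr_sumr mulr_sumr -sumrB -big_split /=.
  by apply: eq_bigr => i _; ring.
rewrite E /t in H.
have := mulr_ge0 H B0.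
have -> : (A - 2 * (C / B) * C + (C / B) ^+ 2 * B) * B = A * B - C ^+ 2.
  by field.
by rewrite subr_ge0 mulrC.
Qed.

Lemma mink (I : finType) (f g : I -> R) :
  Num.sqrt (\sum_i (f i + g i) ^+ 2) <=
  Num.sqrt (\sum_i f i ^+ 2) + Num.sqrt (\sum_i g i ^+ 2).
Proof.
set A := \sum_i f i ^+ 2; set B := \sum_i g i ^+ 2; set C := \sum_i f i * g i.
have B0 : 0 <= B by apply: sumr_ge0 => i _; exact: sqr_ge0.
have A0 : 0 <= A by apply: sumr_ge0 => i _; exact: sqr_ge0.
have HC : C <= Num.sqrt A * Num.sqrt B.
  rewrite -sqrtrM //; apply: le_trans (ler_norm C) _.
  by rewrite -sqrtr_sqr ler_sqrt ?mulr_ge0 //; exact: cs_sq.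
have E : \sum_i (f i + g i) ^+ 2 = A + C *+ 2 + B.
  rewrite /A /C /B.
  rewrite -[_ *+ 2]mulr_natr mulr_suml -!big_split /=.
  by apply: eq_bigr => i _; ring.
rewrite E -[X in _ <= X](ger0_norm (addr_ge0 (sqrtr_ge0 A) (sqrtr_ge0 B))) -sqrtr_sqr ler_sqrt ?sqr_ge0 //.
have -> : (Num.sqrt A + Num.sqrt B) ^+ 2 = Num.sqrt A ^+ 2 + (Num.sqrt A * Num.sqrt B) *+ 2 + Num.sqrt B ^+ 2 by ring.
rewrite !sqr_sqrtr //.
by rewrite lerD2r lerD2l lerMn2r.
Qed.


Lemma vnorm_ge0 m (v : 'cV[R]_m) : 0 <= vnorm v.
Proof. exact: sqrtr_ge0. Qed.

Lemma vnorm_sq m (v : 'cV[R]_m) : vnorm v ^+ 2 = \sum_i v i 0 ^+ 2.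
Proof. by rewrite sqr_sqrtr //; apply: sumr_ge0 => i _; exact: sqr_ge0. Qed.

Lemma vnorm_entry m (v : 'cV[R]_m) i : `|v i 0| <= vnorm v.
Proof.
rewrite -sqrtr_sqr ler_sqrt; last by apply: sumr_ge0 => j _; exact: sqr_ge0.
rewrite (bigD1 i) //= lerDl; apply: sumr_ge0 => j _; exact: sqr_ge0.
Qed.

Lemma vnormZ m (c : R) (v : 'cV[R]_m) : vnorm (c *: v) = `|c| * vnorm v.
Proof.
rewrite /vnorm -sqrtr_sqr -sqrtrM ?sqr_ge0 // mulr_sumr; congr Num.sqrt.
by apply: eq_bigr => i _; rewrite mxE exprMn.
Qed.

Lemma vnorm_l1 m (w : 'cV[R]_m) : vnorm w <= \sum_i `|w i 0|.
Proof.
have S0 : 0 <= \sum_i `|w i 0| by apply: sumr_ge0 => i _.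
rewrite -[X in _ <= X](ger0_norm S0) -sqrtr_sqr ler_sqrt ?sqr_ge0 //.
rewrite expr2 mulr_suml; apply: ler_sum => i _.
rewrite mulr_sumr (bigD1 i) //= -expr2 real_normK ?num_real //.
by rewrite lerDl; apply: sumr_ge0 => j _; rewrite mulr_ge0.
Qed.

Lemma vnorm0 m : vnorm (0 : 'cV[R]_m) = 0.
Proof. by rewrite /vnorm big1 ?sqrtr0 // => i _; rewrite mxE expr0n. Qed.

Section Mn.
Variables (p q : nat) (M : 'M[R]_(p, q)).
Let S := [set vnorm (M *m v) | v in [set v : 'cV[R]_q | vnorm v <= 1]]%classic.

Lemma S_sup : has_sup S.
Proof.
split; first by exists (vnorm (M *m 0)); exists 0 => //=; rewrite vnorm0.
exists (\sum_i \sum_j `|M i j|) => y [v /= Hv <-].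
apply: le_trans (vnorm_l1 (M *m v)) _; apply: ler_sum => i _.
rewrite mxE; apply: le_trans (ler_norm_sum _ _ _) _; apply: ler_sum => j _.
rewrite normrM ler_piMr //; apply: le_trans (vnorm_entry v j) Hv.
Qed.

Lemma mnorm2_ge0 : 0 <= mnorm2 M.
Proof.
apply: (sup_upper_bound S_sup); exists 0 => /=; first by rewrite vnorm0.
by rewrite mulmx0 vnorm0.
Qed.

Lemma mnorm2_bound v : vnorm (M *m v) <= mnorm2 M * vnorm v.
Proof.
have [z|nz] := eqVneq (vnorm v) 0.
  have -> : v = 0.
    apply/matrixP => i j; rewrite (ord1 j) mxE; apply/eqP; rewrite -normr_eq0.
    by rewrite eq_le normr_ge0 andbT -z vnorm_entry.
  by rewrite mulmx0 vnorm0 mulr_ge0 // ?mnorm2_ge0 // vnorm_ge0.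
have vp : 0 < vnorm v by rewrite lt_def nz vnorm_ge0.
set u := (vnorm v)^-1 *: v.
have Hu : vnorm u = 1 by rewrite vnormZ ger0_norm ?invr_ge0 ?vnorm_ge0 // mulVf.
have : vnorm (M *m u) <= mnorm2 M.
  by apply: (sup_upper_bound S_sup); exists u => //=; rewrite Hu.
rewrite /u -scalemxAr vnormZ ger0_norm ?invr_ge0 ?vnorm_ge0 //.
by rewrite ler_pdivrMl // mulrC.
Qed.
End Mn.


Section FF.
Variables (aT : finType) (rT : zmodType).
Lemma ffD (f g : {ffun aT -> rT}) x : (f + g) x = f x + g x.
Proof. exact: ffunE. Qed.
Lemma ffN (f : {ffun aT -> rT}) x : (- f) x = - f x.
Proof. exact: ffunE. Qed.
Lemma ffB (f g : {ffun aT -> rT}) x : (f - g) x = f x - g x.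
Proof. by rewrite ffD ffN. Qed.
Lemma ff0 x : (0 : {ffun aT -> rT}) x = 0.
Proof. exact: ffunE. Qed.
End FF.
Lemma ffZ (aT : finType) p q (c : R) (f : {ffun aT -> 'M[R]_(p,q)}) x : (c *: f) x = c *: f x.
Proof. exact: ffunE. Qed.

Definition mko (n a : nat) (l : 'I_n) (p : 'I_a) : 'I_(n * a).
Proof.
refine (@Ordinal _ (l * a + p) _).
case: l p => l Hl [p Hp] /=.
have : (l * a + p < l.+1 * a)%N by rewrite mulSn addnC ltn_add2r.
move=> H; apply: leq_trans H _; rewrite leq_mul2r Hl orbT //.
Defined.
Arguments mko {n a}.

Lemma mkoE n a l p : val (@mko n a l p) = (l * a + p)%N.
Proof. by []. Qed.

Lemma sum_split n a (F : 'I_(n * a) -> R) :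
  \sum_r F r = \sum_(l < n) \sum_(p < a) F (mko l p).
Proof.
pose G (c : nat) := if insub c is Some r then F r else 0.
have GE : forall r, G (val r) = F r by move=> r; rewrite /G valK.
transitivity (\sum_(r < n * a) G r); first by apply: eq_bigr => r _; rewrite GE.
rewrite -(big_mkord (fun _ => true) G) big_nat_mul big_mkord.
apply: eq_bigr => l _.
rewrite -{1}[(l * a)%N]add0n big_addn mulSn addnK big_mkord.
apply: eq_bigr => p _; rewrite addnC -GE //.
Qed.

Lemma divmk (k a i : nat) : (i < a)%N -> ((k * a + i) %/ a = k)%N /\ ((k * a + i) %% a = i)%N.
Proof.
move=> Hi; have a0 : (0 < a)%N by apply: leq_ltn_trans Hi.
by rewrite divnMDl // divn_small // addn0 modnMDl modn_small.
Qed.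

Arguments divmk k {a i}.

Lemma sliceE a b n (X : tensor R a b n) (l : 'I_n) : slice X l = X l.
Proof. by rewrite /slice valK. Qed.

Lemma mentE p q (M : 'M[R]_(p,q)) (i : 'I_p) (j : 'I_q) : ment M i j = M i j.
Proof. by rewrite /ment !valK. Qed.

Lemma unfoldE a b n (X : tensor R a b n) l p j : unfold X (mko l p) j = X l p j.
Proof.
rewrite mxE mkoE; have [-> ->] := divmk l (ltn_ord p).
by rewrite sliceE mentE.
Qed.

Lemma foldE a b n (M : 'M[R]_(n * a, b)) k i j : fold M k i j = M (mko k i) j.
Proof. by rewrite ffunE mxE -mkoE mentE. Qed.


Section T.
Variable m : nat.
Local Notation N := m.+1.

Lemma valsub (k l : 'I_N) : val (k - l) = ((k + N - l) %% N)%N.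
Proof. by rewrite /= modnDmr addnBA // ltnW. Qed.

Lemma tprodE a b c (A : tensor R a b N) (X : tensor R b c N) :
  tprod A X = [ffun k => \sum_l A (k - l) *m X l].
Proof.
apply/ffunP => k; apply/matrixP => i j.
rewrite foldE ffunE summxE mxE sum_split; apply: eq_bigr => l _.
rewrite mxE; apply: eq_bigr => p _.
rewrite unfoldE mxE !mkoE.
have [-> ->] := divmk k (ltn_ord i).
have [-> ->] := divmk l (ltn_ord p).
by rewrite -valsub sliceE mentE.
Qed.

End T.

Definition msq p q (M : 'M[R]_(p,q)) := \sum_r \sum_j M r j ^+ 2.
Arguments msq {p q}.

Lemma fnorm_fold a b n (M : 'M[R]_(n * a, b)) : fnorm (fold M) = Num.sqrt (msq M).
Proof.
rewrite /fnorm /msq sum_split; congr Num.sqrt; apply: eq_bigr => k _.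
apply: eq_bigr => i _; apply: eq_bigr => j _; by rewrite foldE.
Qed.

Lemma fnorm_unfold a b n (X : tensor R a b n) : fnorm X = Num.sqrt (msq (unfold X)).
Proof.
rewrite /fnorm /msq sum_split; congr Num.sqrt; apply: eq_bigr => k _.
apply: eq_bigr => i _; apply: eq_bigr => j _; by rewrite unfoldE.
Qed.

Lemma msq_ge0 p q (M : 'M[R]_(p,q)) : 0 <= msq M.
Proof. by apply: sumr_ge0 => i _; apply: sumr_ge0 => j _; exact: sqr_ge0. Qed.

Lemma msq_mul p q s (M : 'M[R]_(p,q)) (U : 'M[R]_(q,s)) :
  msq (M *m U) <= mnorm2 M ^+ 2 * msq U.
Proof.
rewrite /msq exchange_big [X in _ <= _ * X]exchange_big mulr_sumr.
apply: ler_sum => j _.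
have E : forall (v : 'cV[R]_q), \sum_r (M *m v) r 0 ^+ 2 = vnorm (M *m v) ^+ 2.
  by move=> v; rewrite vnorm_sq.
have -> : \sum_i (M *m U) i j ^+ 2 = vnorm (M *m col j U) ^+ 2.
  rewrite vnorm_sq; apply: eq_bigr => i _; congr (_ ^+ 2).
  by rewrite !mxE; apply: eq_bigr => k _; rewrite !mxE.
have -> : \sum_i U i j ^+ 2 = vnorm (col j U) ^+ 2.
  by rewrite vnorm_sq; apply: eq_bigr => i _; rewrite !mxE.
rewrite -exprMn !expr2; apply: ler_pM; rewrite ?vnorm_ge0 //; exact: mnorm2_bound.
Qed.

Lemma fnorm_tprod a b c n (C : tensor R a b n) (Y : tensor R b c n) :
  fnorm (tprod C Y) <= opnorm C * fnorm Y.
Proof.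
rewrite /tprod fnorm_fold fnorm_unfold /opnorm.
rewrite -[X in _ <= X * _](ger0_norm (mnorm2_ge0 (bcirc C))) -sqrtr_sqr -sqrtrM ?sqr_ge0 //.
rewrite ler_sqrt; last by rewrite mulr_ge0 ?sqr_ge0 ?msq_ge0.
exact: msq_mul.
Qed.

Lemma fnorm_ge0 a b n (T : tensor R a b n) : 0 <= fnorm T.
Proof. exact: sqrtr_ge0. Qed.

Lemma fnormE a b n (T : tensor R a b n) :
  fnorm T = Num.sqrt (\sum_(q : 'I_n * ('I_a * 'I_b)) T q.1 q.2.1 q.2.2 ^+ 2).
Proof.
rewrite /fnorm; congr Num.sqrt.
under eq_bigr do rewrite pair_big /=.
by rewrite pair_big.
Qed.

Lemma fnormD a b n (S T : tensor R a b n) : fnorm (S + T) <= fnorm S + fnorm T.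
Proof.
rewrite !fnormE.
under eq_bigr do rewrite ffD mxE.
exact: (mink (fun q => S q.1 q.2.1 q.2.2) (fun q => T q.1 q.2.1 q.2.2)).
Qed.

Lemma fnormZ a b n (c : R) (T : tensor R a b n) : fnorm (c *: T) = `|c| * fnorm T.
Proof.
rewrite !fnormE -sqrtr_sqr -sqrtrM ?sqr_ge0 // mulr_sumr; congr Num.sqrt.
by apply: eq_bigr => q _; rewrite ffZ mxE exprMn.
Qed.

Lemma fnormN a b n (T : tensor R a b n) : fnorm (- T) = fnorm T.
Proof. by rewrite -scaleN1r fnormZ normrN normr1 mul1r. Qed.

Lemma fnormB a b n (S T : tensor R a b n) : fnorm (S - T) = fnorm (T - S).
Proof. by rewrite -fnormN opprB. Qed.

Lemma fnorm0 a b n : fnorm (0 : tensor R a b n) = 0.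
Proof. by rewrite -(scale0r (0 : tensor R a b n)) fnormZ normr0 mul0r. Qed.

Lemma fnorm_sum a b n (I : finType) (T : I -> tensor R a b n) :
  fnorm (\sum_i T i) <= \sum_i fnorm (T i).
Proof.
elim/big_rec2: _ => [|i x y _ H]; first by rewrite fnorm0.
by apply: le_trans (fnormD _ _) _; rewrite lerD2l.
Qed.


Section Alg.
Variable m : nat.
Local Notation N := m.+1.

Lemma tprodDr a b c (C : tensor R a b N) (Y Z : tensor R b c N) :
  tprod C (Y + Z) = tprod C Y + tprod C Z.
Proof.
rewrite !tprodE; apply/ffunP => k; rewrite ffD !ffunE -big_split /=.
by apply: eq_bigr => l _; rewrite ffD mulmxDr.
Qed.

Lemma tprodZr a b c (C : tensor R a b N) (s : R) (Y : tensor R b c N) :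
  tprod C (s *: Y) = s *: tprod C Y.
Proof.
rewrite !tprodE; apply/ffunP => k; rewrite ffZ !ffunE scaler_sumr.
by apply: eq_bigr => l _; rewrite ffZ scalemxAr.
Qed.

Lemma tprod0r a b c (C : tensor R a b N) : tprod C (0 : tensor R b c N) = 0.
Proof. by rewrite -(scale0r (0 : tensor R b c N)) tprodZr scale0r. Qed.

Lemma tprodNr a b c (C : tensor R a b N) (Y : tensor R b c N) :
  tprod C (- Y) = - tprod C Y.
Proof. by rewrite -scaleN1r tprodZr scaleN1r. Qed.

Lemma tprodBr a b c (C : tensor R a b N) (Y Z : tensor R b c N) :
  tprod C (Y - Z) = tprod C Y - tprod C Z.
Proof. by rewrite tprodDr tprodNr. Qed.

Lemma tprod_sumr a b c (C : tensor R a b N) (I : finType) (Y : I -> tensor R b c N) :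
  tprod C (\sum_i Y i) = \sum_i tprod C (Y i).
Proof. by apply: (big_morph _ (tprodDr C)); rewrite tprod0r. Qed.

Lemma tprodDl a b c (P Q : tensor R a b N) (Y : tensor R b c N) :
  tprod (P + Q) Y = tprod P Y + tprod Q Y.
Proof.
rewrite !tprodE; apply/ffunP => k; rewrite ffD !ffunE -big_split /=.
by apply: eq_bigr => l _; rewrite ffD mulmxDl.
Qed.

Lemma tprodZl a b c (P : tensor R a b N) (s : R) (Y : tensor R b c N) :
  tprod (s *: P) Y = s *: tprod P Y.
Proof.
rewrite !tprodE; apply/ffunP => k; rewrite ffZ !ffunE scaler_sumr.
by apply: eq_bigr => l _; rewrite ffZ scalemxAl.
Qed.

Lemma tprodBl a b c (P Q : tensor R a b N) (Y : tensor R b c N) :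
  tprod (P - Q) Y = tprod P Y - tprod Q Y.
Proof. by rewrite tprodDl -scaleN1r tprodZl scaleN1r. Qed.

Lemma tprod0l a b c (Y : tensor R b c N) : tprod (0 : tensor R a b N) Y = 0.
Proof. by rewrite -(scale0r (0 : tensor R a b N)) tprodZl scale0r. Qed.

Lemma tprod_suml a b c (I : finType) (P : I -> tensor R a b N) (Y : tensor R b c N) :
  tprod (\sum_i P i) Y = \sum_i tprod (P i) Y.
Proof.
by apply: (big_morph (fun P => tprod P Y) (fun P Q => tprodDl P Q Y)); rewrite tprod0l.
Qed.

Lemma tprodA a b c d (P : tensor R a b N) (Q : tensor R b c N) (Y : tensor R c d N) :
  tprod P (tprod Q Y) = tprod (tprod P Q) Y.
Proof.
rewrite !tprodE; apply/ffunP => k; rewrite !ffunE.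
under eq_bigr do rewrite ffunE mulmx_sumr.
under [RHS]eq_bigr do rewrite ffunE mulmx_suml.
rewrite exchange_big /=; apply: eq_bigr => l _.
rewrite (reindex_inj (addIr l)) /=; apply: eq_bigr => l' _.
by rewrite mulmxA addrK opprD addrA [k - l' - l]addrAC.
Qed.

Lemma tid1 b c (Y : tensor R b c N) : tprod (tid R b N) Y = Y.
Proof.
rewrite tprodE; apply/ffunP => k; rewrite ffunE (bigD1 k) //= big1 ?addr0.
  by rewrite ffunE subrr /= mul1mx.
move=> l nlk; rewrite ffunE.
have : k - l != 0 by rewrite subr_eq0 eq_sym.
move=> /eqP H; case: ifP => [/eqP H0|]; last by rewrite mul0mx.
by exfalso; apply: H; apply: val_inj; rewrite H0.
Qed.

Lemma tslice_sum a b (A : tensor R a b N) : \sum_(s : 'I_N) tslice A s = A.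
Proof.
apply/ffunP => l; rewrite sum_ffunE (bigD1 l) //= ffunE eqxx big1 ?addr0 //.
move=> s ne; rewrite ffunE; case: ifP => // /eqP H.
by exfalso; move/eqP: ne; apply; apply: val_inj.
Qed.

End Alg.

Section Main.
Variables (m n1 n2 n3 : nat).
Local Notation N := m.+1.
Variables (A : tensor R n1 n2 N) (B : tensor R n1 n3 N) (Xstar : tensor R n2 n3 N)
  (alpha : R) (X : nat -> tensor R n2 n3 N).
Hypothesis Halpha : 0 < alpha.
Hypothesis Hsol : tprod A Xstar = B.
Hypothesis HX0 : X 0%N = 0.
Hypothesis HXrec : forall t : nat,
     X t.+1 = X t + alpha *: tprod (ttr (tslice A (t %% N)))
        (B - \sum_(j < N) (if (j <= t)%N
                           then tprod (tslice A ((t + N - j) %% N)) (X (t - j)%N)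
                           else 0)).

Let E s := fnorm (X s - Xstar).

Lemma sig_val t (j : 'I_N) : val (inZp t - j : 'I_N) = ((t + N - j) %% N)%N.
Proof.
rewrite valsub /= -!addnBA ?(ltnW (ltn_ord j)) // modnDml //.
Qed.

Lemma step t : E t.+1 <= kappa A alpha * E t
  + alpha * mu A * \sum_(i < m) (if (i.+1 <= t)%N then E (t - i.+1)%N else E 0%N).
Proof.
pose i0 : 'I_N := inZp t.
pose D := fun j : 'I_N => if (j <= t)%N then X (t - j)%N - Xstar else - Xstar.
have HB : B = \sum_(j : 'I_N) tprod (tslice A ((i0 - j)%R : 'I_N)) Xstar.
  rewrite -Hsol; transitivity (tprod (\sum_(s : 'I_N) tslice A s) Xstar); first by rewrite tslice_sum.
  by rewrite tprod_suml (reindex_inj (subrI i0)).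
have Hres : B - \sum_(j < N) (if (j <= t)%N then tprod (tslice A ((t + N - j) %% N)) (X (t - j)%N) else 0)
   = - \sum_(j : 'I_N) tprod (tslice A ((i0 - j)%R : 'I_N)) (D j).
  rewrite HB -sumrB -sumrN; apply: eq_bigr => j _; rewrite /D sig_val.
  by case: ifP => _; [rewrite tprodBr opprB | rewrite tprodNr opprK subr0].
have D0 : D ord0 = X t - Xstar by rewrite /D /= subn0.
have HX : X t.+1 - Xstar = tprod (tid R n2 N - alpha *: tprod (ttr (tslice A i0)) (tslice A i0)) (D ord0)
   - alpha *: \sum_(i < m) tprod (tprod (ttr (tslice A i0)) (tslice A ((i0 - lift ord0 i)%R : 'I_N))) (D (lift ord0 i)).
  rewrite HXrec Hres tprodNr tprod_sumr big_ord_recl subr0 D0.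
  rewrite tprodBl tprodZl tid1 -!tprodA.
  under [in RHS]eq_bigr do rewrite -tprodA.
  have -> : (t %% N)%N = i0 by [].
  by rewrite scalerN scalerDr opprD !addrA [LHS]addrAC [in LHS](addrAC (X t)).
rewrite /E HX; apply: le_trans (fnormD _ _) _; rewrite fnormN fnormZ (gtr0_norm Halpha).
apply: lerD.
  rewrite D0; apply: le_trans (fnorm_tprod _ _) _; apply: ler_wpM2r; first exact: fnorm_ge0.
  exact: (le_bigmax 0 (fun i : 'I_N => opnorm (tid R n2 N - alpha *: tprod (ttr (tslice A i)) (tslice A i))) i0).
rewrite -mulrA; apply: ler_wpM2l; first exact: ltW.
apply: le_trans (fnorm_sum _) _; rewrite mulr_sumr; apply: ler_sum => i _.
apply: le_trans (fnorm_tprod _ _) _; apply: ler_pM.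
- exact: mnorm2_ge0.
- exact: fnorm_ge0.
- have ne : i0 != (i0 - lift ord0 i)%R.
    apply/eqP => H; have : (0 : 'I_N) = lift ord0 i by apply: (subrI i0); rewrite subr0.
    by move/(congr1 (@nat_of_ord N)); rewrite lift0.
  apply: le_trans (@le_bigmax_cond _ _ _ 0 (i0 - lift ord0 i)%R (fun j => i0 != j) (fun j : 'I_N => opnorm (tprod (ttr (tslice A i0)) (tslice A j))) ne) _.
  exact: (le_bigmax 0 (fun i : 'I_N => \big[Num.max/0]_(j < N | i != j) opnorm (tprod (ttr (tslice A i)) (tslice A j))) i0).
- rewrite /D lift0; case: ifP => // _.
  by rewrite HX0 sub0r fnormN.
Qed.


Variable eps : int -> R.
Hypothesis Heps0 : forall t : int, t <= 0 -> eps t = 1.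
Hypothesis Heps : forall t : nat, (1 <= t)%N ->
     eps t%:Z = kappa A alpha ^+ t
       + alpha * mu A * \sum_(0 <= j < t) (kappa A alpha ^+ j
            * \sum_(1 <= i < N) eps (t%:Z - 1 - j%:Z - i%:Z)).

Lemma eps_all t : eps t%:Z = kappa A alpha ^+ t
       + alpha * mu A * \sum_(0 <= j < t) (kappa A alpha ^+ j
            * \sum_(i < m) eps (t%:Z - 1 - j%:Z - (i.+1)%:Z)).
Proof.
case: t => [|t]; first by rewrite Heps0 // big_geq // mulr0 addr0 expr0.
rewrite Heps //; congr (_ + _ * _); apply: eq_bigr => j _; congr (_ * _).
by rewrite big_add1 /= big_mkord.
Qed.

Lemma eps_rec t : eps t.+1%:Z = kappa A alpha * eps t%:Z
   + alpha * mu A * \sum_(i < m) eps (t%:Z - (i.+1)%:Z).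
Proof.
rewrite !eps_all big_nat_recl //= expr0 mul1r exprS.
have E1 : \sum_(i < m) eps (t.+1%:Z - 1 - 0%N%:Z - (i.+1)%:Z) = \sum_(i < m) eps (t%:Z - (i.+1)%:Z).
  by apply: eq_bigr => i _; congr eps; lia.
have E2 : \sum_(0 <= j < t) (kappa A alpha ^+ j.+1 * \sum_(i < m) eps (t.+1%:Z - 1 - (j.+1)%:Z - (i.+1)%:Z))
  = kappa A alpha * \sum_(0 <= j < t) (kappa A alpha ^+ j * \sum_(i < m) eps (t%:Z - 1 - j%:Z - (i.+1)%:Z)).
  rewrite mulr_sumr; apply: eq_bigr => j _; rewrite exprS -mulrA; congr (_ * (_ * _)).
  by apply: eq_bigr => i _; congr eps; lia.
rewrite E1 E2; ring.
Qed.

Lemma main_ineq t : E t <= eps t%:Z * E 0%N.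
Proof.
have ka0 : 0 <= kappa A alpha by rewrite /kappa; apply: bigmax_ge_id.
have mu0 : 0 <= alpha * mu A.
  apply: mulr_ge0; first exact: ltW.
  rewrite /mu; apply: bigmax_ge_id.
elim/ltn_ind: t => -[|t] IH; first by rewrite Heps0 // mul1r.
apply: le_trans (step t) _.
have H1 : kappa A alpha * E t <= kappa A alpha * (eps t%:Z * E 0%N).
  by apply: ler_wpM2l => //; exact: IH.
have H2 : \sum_(i < m) (if (i.+1 <= t)%N then E (t - i.+1)%N else E 0%N)
    <= \sum_(i < m) (eps (t%:Z - (i.+1)%:Z) * E 0%N).
  apply: ler_sum => i _; case: ifP => h.
    have -> : t%:Z - (i.+1)%:Z = (t - i.+1)%N%:Z by rewrite subzn.
    by apply: IH; rewrite ltnS leq_subr.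
  by rewrite Heps0 ?mul1r //; move/negbT: h; rewrite -ltnNge => h; lia.
apply: le_trans (lerD H1 (ler_wpM2l mu0 H2)) _.
rewrite eps_rec -mulr_suml le_eqVlt; apply/orP; left; apply/eqP; ring.
Qed.

End Main.
End Real.

Theorem lemma2 (R : realType) (n1 n2 n3 n : nat) (Hn : (0 < n)%N)
  (A : tensor R n1 n2 n) (B : tensor R n1 n3 n) (Xstar : tensor R n2 n3 n)
  (alpha : R) (Halpha : 0 < alpha)
  (Hsol : tprod A Xstar = B)
  (Huniq : forall Y : tensor R n2 n3 n, tprod A Y = B -> Y = Xstar)
  (X : nat -> tensor R n2 n3 n)
  (HX0 : X 0%N = 0)
  (HXrec : forall t : nat,
     X t.+1 = X t + alpha *: tprod (ttr (tslice A (t %% n)))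
        (B - \sum_(j < n) (if (j <= t)%N
                           then tprod (tslice A ((t + n - j) %% n)) (X (t - j)%N)
                           else 0)))
  (eps : int -> R)
  (Heps0 : forall t : int, t <= 0 -> eps t = 1)
  (Heps : forall t : nat, (1 <= t)%N ->
     eps t%:Z = kappa A alpha ^+ t
       + alpha * mu A * \sum_(0 <= j < t) (kappa A alpha ^+ j
            * \sum_(1 <= i < n) eps (t%:Z - 1 - j%:Z - i%:Z))) :
  forall t : nat, (1 <= t)%N ->
    fnorm (X t - Xstar) <= eps t%:Z * fnorm (X 0%N - Xstar).
Proof.
case: n Hn A B Xstar Hsol Huniq X HX0 HXrec Heps => [//|m] _ A B Xstar Hsol _ X HX0 HXrec Heps t _.
exact: (main_ineq Halpha Hsol HX0 HXrec Heps0 Heps).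
Qed.
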